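(* Let $\phi\colon F\to G$ of type $|\alpha|\xrightarrow{\sigma}n\xleftarrow{\tau}|\beta|$ and $\psi\colon G\to H$ of type $|\beta|\xrightarrow{\eta}m\xleftarrow{\theta}|\gamma|$ be transformations, with $F\colon\mathbb B^\alpha\to\mathbb C$, $G\colon\mathbb B^\beta\to\mathbb C$, $H\colon\mathbb B^\gamma\to\mathbb C$, and let $\zeta\colon n\to l$, $\xi\colon m\to l$ be the pushout of $\tau$ and $\eta$ in finite sets, so that $\psi\circ\phi$ has type $|\alpha|\xrightarrow{\zeta\sigma}l\xleftarrow{\xi\theta}|\gamma|$. Let $i\in l$. If $\phi$ is dinatural in its $x$-th variable for every $x\in\zeta^{-1}\{i\}$, $\psi$ is dinatural in its $y$-th variable for every $y\in\xi^{-1}\{i\}$, and the $i$-th connected component of $\Gamma(\psi)\circ\Gamma(\phi)$ is acyclic, then $\psi\circ\phi$ is dinatural in its $i$-th variable.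
   Context: Notation: for $k\in\mathbb N$, $k$ also denotes $\{1,\dots,k\}$. For $\alpha\in\{+,-\}^*$, $\mathbb B^\alpha=\mathbb B^{\alpha_1}\times\cdots\times\mathbb B^{\alpha_{|\alpha|}}$ with $\mathbb B^+=\mathbb B$, $\mathbb B^-=\mathbb B^{op}$. For $\mathbf A=(A_1,\dots,A_n)$ and $\sigma\colon k\to n$, $\mathbf A\sigma=(A_{\sigma1},\dots,A_{\sigma k})$. A morphism $f\colon A\to B$ placed in a contravariant argument is regarded as a morphism $B\to A$ of $\mathbb B^{op}$. A transformation $\phi\colon F\to G$ of type $|\alpha|\xrightarrow{\sigma}n\xleftarrow{\tau}|\beta|$ ($\sigma,\tau$ arbitrary functions) is a family $\phi_{\mathbf A}\colon F(\mathbf A\sigma)\to G(\mathbf A\tau)$, $\mathbf A\in\mathrm{Ob}(\mathbb B)^n$; $A_i$ is its $i$-th variable. $\mathbf A[X,Y/i]\sigma$ is the tuple whose $j$-th entry is $X$ if $\sigma j=i,\alpha_j=-$, $Y$ if $\sigma j=i,\alpha_j=+$, and $A_{\sigma j}$ (or $1_{A_{\sigma j}}$ when $X,Y$ are morphisms) otherwise; $\mathbf A[X/i]=\mathbf A[X,X/i]$. $\phi$ is dinatural in its $i$-th variable if for all objects $A_j$ ($j\neq i$) and all $f\colon A\to B$: $G(\mathbf A[A,f/i]\tau)\circ\phi_{\mathbf A[A/i]}\circ F(\mathbf A[f,A/i]\sigma)=G(\mathbf A[f,B/i]\tau)\circ\phi_{\mathbf A[B/i]}\circ F(\mathbf A[B,f/i]\sigma)$.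 Vertical composite: $(\psi\circ\phi)_{\mathbf A}=\psi_{\mathbf A\xi}\circ\phi_{\mathbf A\zeta}$ for $\mathbf A\in\mathrm{Ob}(\mathbb B)^l$. Composite graph $\Gamma(\psi)\circ\Gamma(\phi)$: directed bipartite graph with places the disjoint union of $|\alpha|,|\beta|,|\gamma|$ and transitions $n\sqcup m$. For $t\in n$: arc from place $j$ of the $\alpha$-block to $t$ iff $\sigma j=t,\alpha_j=+$; from $t$ to it iff $\sigma j=t,\alpha_j=-$; arc from place $j$ of the $\beta$-block to $t$ iff $\tau j=t,\beta_j=-$; from $t$ to it iff $\tau j=t,\beta_j=+$. For $t\in m$: arc from place $j$ of the $\beta$-block to $t$ iff $\eta j=t,\beta_j=+$; from $t$ to it iff $\eta j=t,\beta_j=-$; arc from place $j$ of the $\gamma$-block to $t$ iff $\theta j=t,\gamma_j=-$; from $t$ to it iff $\theta j=t,\gamma_j=+$. Its connected components correspond bijectively to $l$: the $i$-th component is the one containing the transitions $t\in n$ with $\zeta t=i$ and $t\in m$ with $\xi t=i$. Acyclic means without directed cycles. *)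

(* Defs.v *)
From mathcomp Require Import all_boot.
Set Implicit Arguments. Unset Strict Implicit. Unset Printing Implicit Defensive.

Record Category := {
  Ob : Type;
  Hom : Ob -> Ob -> Type;
  idm : forall X, Hom X X;
  comp : forall X Y Z, Hom Y Z -> Hom X Y -> Hom X Z;
  comp_assoc : forall X Y Z W (h : Hom Z W) (g : Hom Y Z) (f : Hom X Y),
      comp h (comp g f) = comp (comp h g) f;
  comp_id_l : forall X Y (f : Hom X Y), comp (idm Y) f = f;
  comp_id_r : forall X Y (f : Hom X Y), comp f (idm X) = f }.
Arguments idm {c} X.
Arguments comp {c X Y Z} g f.
Arguments Hom {c} X Y.

(* Morphisms of B^+ = B (b = true) or of B^- = B^op (b = false). *)
Definition vHom (C : Category) (b : bool) (X Y : Ob C) : Type :=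
  if b then Hom X Y else Hom Y X.
Arguments vHom : clear implicits.

Definition vid (C : Category) (b : bool) (X : Ob C) : vHom C b X X :=
  if b as b' return vHom C b' X X then idm X else idm X.
Arguments vid : clear implicits.

Definition vcomp (C : Category) (b : bool) (X Y Z : Ob C) :
  vHom C b Y Z -> vHom C b X Y -> vHom C b X Z :=
  if b as b' return vHom C b' Y Z -> vHom C b' X Y -> vHom C b' X Z
  then fun g f => comp g f else fun g f => comp f g.

Record MFunctor (B C : Category) (k : nat) (var : 'I_k -> bool) := {
  fobj : ('I_k -> Ob B) -> Ob C;
  fmor : forall S T : 'I_k -> Ob B,
      (forall j, vHom B (var j) (S j) (T j)) -> Hom (fobj S) (fobj T);
  fmor_id : forall S, fmor (fun j => vid B (var j) (S j)) = idm (fobj S);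
  fmor_comp : forall S T U (f : forall j, vHom B (var j) (S j) (T j))
                           (g : forall j, vHom B (var j) (T j) (U j)),
      fmor (fun j => vcomp (g j) (f j)) = comp (fmor g) (fmor f) }.
Arguments fobj {B C k var} m S.
Arguments fmor {B C k var} m {S T} _.

Definition transf (B C : Category) (a : nat) (alpha : 'I_a -> bool)
  (b : nat) (beta : 'I_b -> bool) (F : MFunctor B C alpha) (G : MFunctor B C beta)
  (n : nat) (sigma : 'I_a -> 'I_n) (tau : 'I_b -> 'I_n) : Type :=
  forall A : 'I_n -> Ob B,
    Hom (fobj F (fun j => A (sigma j))) (fobj G (fun j => A (tau j))).

Definition upd (B : Category) (n : nat) (A : 'I_n -> Ob B) (i : 'I_n) (X : Ob B)
  : 'I_n -> Ob B := fun k => if k == i then X else A k.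

Definition subObj (B : Category) (k : nat) (var : 'I_k -> bool) (n : nat)
  (A : 'I_n -> Ob B) (i : 'I_n) (sig : 'I_k -> 'I_n) (N P : Ob B) : 'I_k -> Ob B :=
  fun j => if sig j == i then (if var j then P else N) else A (sig j).

(* Morphism A[fn,fp/i]sig : A[N,P/i]sig -> A[Z/i]sig of B^var, where fp : P -> Z
   sits in the covariant slots, fn : Z -> N (i.e. N -> Z in B^op) in the
   contravariant ones, and identities elsewhere. *)
Definition inMor (B : Category) (k : nat) (var : 'I_k -> bool) (n : nat)
  (A : 'I_n -> Ob B) (i : 'I_n) (sig : 'I_k -> 'I_n) (N P Z : Ob B)
  (fp : Hom P Z) (fn : Hom Z N) :
  forall j, vHom B (var j) (subObj var A i sig N P j) (upd A i Z (sig j)) :=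
  fun j =>
  if sig j == i as c return
     vHom B (var j) (if c then (if var j then P else N) else A (sig j))
                    (if c then Z else A (sig j))
  then (if var j as bb return vHom B bb (if bb then P else N) Z
        then fp else fn)
  else vid B (var j) (A (sig j)).

Definition outMor (B : Category) (k : nat) (var : 'I_k -> bool) (n : nat)
  (A : 'I_n -> Ob B) (i : 'I_n) (sig : 'I_k -> 'I_n) (N P Z : Ob B)
  (fp : Hom Z P) (fn : Hom N Z) :
  forall j, vHom B (var j) (upd A i Z (sig j)) (subObj var A i sig N P j) :=
  fun j =>
  if sig j == i as c return
     vHom B (var j) (if c then Z else A (sig j))
                    (if c then (if var j then P else N) else A (sig j))
  then (if var j as bb return vHom B bb Z (if bb then P else N)
        then fp else fn)
  else vid B (var j) (A (sig j)).

Definition dinatural_in (B C : Category) (a : nat) (alpha : 'I_a -> bool)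
  (b : nat) (beta : 'I_b -> bool) (F : MFunctor B C alpha) (G : MFunctor B C beta)
  (n : nat) (sigma : 'I_a -> 'I_n) (tau : 'I_b -> 'I_n)
  (phi : transf F G sigma tau) (i : 'I_n) : Prop :=
  forall (A : 'I_n -> Ob B) (X Y : Ob B) (f : Hom X Y),
    comp (fmor G (outMor beta A i tau f (idm X)))
         (comp (phi (upd A i X)) (fmor F (inMor alpha A i sigma (idm X) f)))
    =
    comp (fmor G (outMor beta A i tau (idm Y) f))
         (comp (phi (upd A i Y)) (fmor F (inMor alpha A i sigma f (idm Y)))).

Definition is_pushout (b n m l : nat) (tau : 'I_b -> 'I_n) (eta : 'I_b -> 'I_m)
  (zeta : 'I_n -> 'I_l) (xi : 'I_m -> 'I_l) : Prop :=
  (forall j, zeta (tau j) = xi (eta j)) /\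
  forall (T : finType) (z' : 'I_n -> T) (x' : 'I_m -> T),
    (forall j, z' (tau j) = x' (eta j)) ->
    (exists u : 'I_l -> T, (forall t, u (zeta t) = z' t) /\ (forall t, u (xi t) = x' t))
    /\ (forall u v : 'I_l -> T,
          (forall t, u (zeta t) = z' t) -> (forall t, u (xi t) = x' t) ->
          (forall t, v (zeta t) = z' t) -> (forall t, v (xi t) = x' t) ->
          forall s, u s = v s).

Definition castTgt (C : Category) (X Y Y' : Ob C) (e : Y = Y') (f : Hom X Y)
  : Hom X Y' := eq_rect Y (fun Z => Hom X Z) f Y' e.

Definition vcompT (B C : Category) (a : nat) (alpha : 'I_a -> bool)
  (b : nat) (beta : 'I_b -> bool) (c : nat) (gamma : 'I_c -> bool)
  (F : MFunctor B C alpha) (G : MFunctor B C beta) (H : MFunctor B C gamma)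
  (n m l : nat) (sigma : 'I_a -> 'I_n) (tau : 'I_b -> 'I_n)
  (eta : 'I_b -> 'I_m) (theta : 'I_c -> 'I_m)
  (zeta : 'I_n -> 'I_l) (xi : 'I_m -> 'I_l)
  (Hc : (fun j => zeta (tau j)) = (fun j => xi (eta j)))
  (phi : transf F G sigma tau) (psi : transf G H eta theta)
  : transf F H (fun j => zeta (sigma j)) (fun j => xi (theta j)) :=
  fun A => comp (psi (fun k => A (xi k)))
    (castTgt (f_equal (fun h : 'I_b -> 'I_l => fobj G (fun j => A (h j))) Hc)
             (phi (fun k => A (zeta k)))).

(* vertices: places 'I_a + 'I_b + 'I_c (alpha-, beta-, gamma-blocks),
   transitions 'I_n + 'I_m *)
Definition cedge (a b c n m : nat) (alpha : 'I_a -> bool) (beta : 'I_b -> bool)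
  (gamma : 'I_c -> bool) (sigma : 'I_a -> 'I_n) (tau : 'I_b -> 'I_n)
  (eta : 'I_b -> 'I_m) (theta : 'I_c -> 'I_m)
  (x y : ('I_a + 'I_b + 'I_c) + ('I_n + 'I_m)) : bool :=
  match x, y with
  | inl (inl (inl j)), inr (inl t) => (sigma j == t) && alpha j
  | inr (inl t), inl (inl (inl j)) => (sigma j == t) && ~~ alpha j
  | inl (inl (inr j)), inr (inl t) => (tau j == t) && ~~ beta j
  | inr (inl t), inl (inl (inr j)) => (tau j == t) && beta j
  | inl (inl (inr j)), inr (inr t) => (eta j == t) && beta j
  | inr (inr t), inl (inl (inr j)) => (eta j == t) && ~~ beta j
  | inl (inr j), inr (inr t) => (theta j == t) && ~~ gamma j
  | inr (inr t), inl (inr j) => (theta j == t) && gamma j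
  | _, _ => false
  end.

Definition trans_label (a b c n m l : nat) (zeta : 'I_n -> 'I_l) (xi : 'I_m -> 'I_l)
  (i : 'I_l) (x : ('I_a + 'I_b + 'I_c) + ('I_n + 'I_m)) : bool :=
  match x with
  | inr (inl t) => zeta t == i
  | inr (inr t) => xi t == i
  | inl _ => false
  end.

Definition component_acyclic (a b c n m l : nat) (alpha : 'I_a -> bool)
  (beta : 'I_b -> bool) (gamma : 'I_c -> bool) (sigma : 'I_a -> 'I_n)
  (tau : 'I_b -> 'I_n) (eta : 'I_b -> 'I_m) (theta : 'I_c -> 'I_m)
  (zeta : 'I_n -> 'I_l) (xi : 'I_m -> 'I_l) (i : 'I_l) : Prop :=
  let e := cedge alpha beta gamma sigma tau eta theta in
  forall v w : ('I_a + 'I_b + 'I_c) + ('I_n + 'I_m),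
    (exists t, trans_label zeta xi i t /\
               connect (fun x y => e x y || e y x) t v) ->
    e v w -> ~~ connect e w v.

(* Main.v *)
Require Import Defs.
From mathcomp Require Import all_boot.
From Stdlib Require Import ProofIrrelevance FunctionalExtensionality JMeq.
Set Implicit Arguments. Unset Strict Implicit. Unset Printing Implicit Defensive.
Local Notation comp := Defs.comp.

Lemma vcomp_vid_l (B : Category) (bb : bool) (X Y : Ob B) (u : vHom B bb X Y) :
  vcomp (vid B bb Y) u = u.
Proof. by case: bb u => u /=; rewrite ?comp_id_l ?comp_id_r. Qed.

Lemma vcomp_vid_r (B : Category) (bb : bool) (X Y : Ob B) (u : vHom B bb X Y) :
  vcomp u (vid B bb X) = u.
Proof. by case: bb u => u /=; rewrite ?comp_id_l ?comp_id_r. Qed.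

Lemma flip_core (B C : Category) k1 (var1 : 'I_k1 -> bool) k2 (var2 : 'I_k2 -> bool)
  (F1 : MFunctor B C var1) (G1 : MFunctor B C var2) N (s1 : 'I_k1 -> 'I_N)
  (s2 : 'I_k2 -> 'I_N) (T : transf F1 G1 s1 s2) (t : 'I_N) (Dt : dinatural_in T t)
  (X Y : Ob B) (f : Hom X Y) (A' V1 V2 : 'I_N -> Ob B)
  (e1 : upd A' t X = V1) (e2 : upd A' t Y = V2)
  (SF : 'I_k1 -> Ob B) (TG : 'I_k2 -> Ob B)
  (fr : forall j, vHom B (var1 j) (SF j) (subObj var1 A' t s1 Y X j))
  (gr : forall j, vHom B (var2 j) (subObj var2 A' t s2 X Y j) (TG j))
  (in1 : forall j, vHom B (var1 j) (SF j) (V1 (s1 j)))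
  (in2 : forall j, vHom B (var1 j) (SF j) (V2 (s1 j)))
  (g1 : forall j, vHom B (var2 j) (V1 (s2 j)) (TG j))
  (g2 : forall j, vHom B (var2 j) (V2 (s2 j)) (TG j)) :
  (forall j, JMeq (in1 j) (vcomp (inMor var1 A' t s1 (idm X) f j) (fr j))) ->
  (forall j, JMeq (in2 j) (vcomp (inMor var1 A' t s1 f (idm Y) j) (fr j))) ->
  (forall j, JMeq (g1 j) (vcomp (gr j) (outMor var2 A' t s2 f (idm X) j))) ->
  (forall j, JMeq (g2 j) (vcomp (gr j) (outMor var2 A' t s2 (idm Y) f j))) ->
  comp (fmor G1 g1) (comp (T V1) (fmor F1 in1)) =
  comp (fmor G1 g2) (comp (T V2) (fmor F1 in2)).
Proof.
case: _ / e1 in in1 g1 *; case: _ / e2 in in2 g2 * => H1 H2 H3 H4.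
have -> : in1 = fun j => vcomp (inMor var1 A' t s1 (idm X) f j) (fr j).
  by apply: functional_extensionality_dep => j; apply: JMeq_eq.
have -> : in2 = fun j => vcomp (inMor var1 A' t s1 f (idm Y) j) (fr j).
  by apply: functional_extensionality_dep => j; apply: JMeq_eq.
have -> : g1 = fun j => vcomp (gr j) (outMor var2 A' t s2 f (idm X) j).
  by apply: functional_extensionality_dep => j; apply: JMeq_eq.
have -> : g2 = fun j => vcomp (gr j) (outMor var2 A' t s2 (idm Y) f j).
  by apply: functional_extensionality_dep => j; apply: JMeq_eq.
rewrite !fmor_comp -!comp_assoc; congr (comp _ _).
rewrite !comp_assoc; congr (comp _ _).
by rewrite -!comp_assoc; apply: Dt.
Qed.

Section Main.
Variables (B C : Category)
  (a : nat) (alpha : 'I_a -> bool) (b : nat) (beta : 'I_b -> bool)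
  (c : nat) (gamma : 'I_c -> bool)
  (F : MFunctor B C alpha) (G : MFunctor B C beta) (H : MFunctor B C gamma)
  (n m l : nat) (sigma : 'I_a -> 'I_n) (tau : 'I_b -> 'I_n)
  (eta : 'I_b -> 'I_m) (theta : 'I_c -> 'I_m)
  (phi : transf F G sigma tau) (psi : transf G H eta theta)
  (zeta : 'I_n -> 'I_l) (xi : 'I_m -> 'I_l)
  (Hc : (fun j => zeta (tau j)) = (fun j => xi (eta j)))
  (i : 'I_l) (A : 'I_l -> Ob B) (X Y : Ob B) (f : Hom X Y).

Definition ob (x : bool) : Ob B := if x then Y else X.
Definition up (x : bool) : Hom X (ob x) :=
  if x as x' return Hom X (ob x') then f else idm X.
Definition dn (x : bool) : Hom (ob x) Y :=
  if x as x' return Hom (ob x') Y then idm Y else f.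
Definition Obj (L : 'I_l) (x : bool) : Ob B := if L == i then ob x else A L.
Definition BIn (L : 'I_l) (bb : bool) : Ob B :=
  if L == i then (if bb then X else Y) else A L.
Definition BOut (L : 'I_l) (bb : bool) : Ob B :=
  if L == i then (if bb then Y else X) else A L.

Definition inslot (L : 'I_l) (bb x : bool) : vHom B bb (BIn L bb) (Obj L x) :=
  if L == i as cc return
    vHom B bb (if cc then (if bb then X else Y) else A L) (if cc then ob x else A L)
  then (if bb as bb' return vHom B bb' (if bb' then X else Y) (ob x)
        then up x else dn x)
  else vid B bb (A L).

Definition outslot (L : 'I_l) (bb y : bool) : vHom B bb (Obj L y) (BOut L bb) :=
  if L == i as cc return
    vHom B bb (if cc then ob y else A L) (if cc then (if bb then Y else X) else A L)
  then (if bb as bb' return vHom B bb' (ob y) (if bb' then Y else X)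
        then dn y else up y)
  else vid B bb (A L).

Definition cond (bb x y : bool) : bool := if bb then x ==> y else y ==> x.

Definition conn (bb x y : bool) : cond bb x y -> vHom B bb (ob x) (ob y) :=
  match bb, x, y return cond bb x y -> vHom B bb (ob x) (ob y) with
  | true, false, false => fun _ => idm X
  | true, false, true => fun _ => f
  | true, true, true => fun _ => idm Y
  | true, true, false => fun h => False_rect _ (eq_ind false (fun e : bool => if e then False else True) I true h)
  | false, false, false => fun _ => idm X
  | false, true, false => fun _ => f
  | false, true, true => fun _ => idm Y
  | false, false, true => fun h => False_rect _ (eq_ind false (fun e : bool => if e then False else True) I true h)
  end.

Definition midslot (L1 L2 : 'I_l) (e : L1 = L2) (bb x y : bool)
  (hm : L1 == i -> cond bb x y) : vHom B bb (Obj L1 x) (Obj L2 y) :=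
  match e in _ = L2' return vHom B bb (Obj L1 x) (Obj L2' y) with
  | erefl =>
    (if L1 == i as cc return (cc -> cond bb x y) ->
        vHom B bb (if cc then ob x else A L1) (if cc then ob y else A L1)
     then fun h => conn (h isT) else fun _ => vid B bb (A L1)) hm
  end.

Definition Vn (s : 'I_n -> bool) (k : 'I_n) : Ob B := Obj (zeta k) (s k).
Definition Vm (r : 'I_m -> bool) (k : 'I_m) : Ob B := Obj (xi k) (r k).

Definition ej (j : 'I_b) : zeta (tau j) = xi (eta j) := f_equal (fun h => h j) Hc.

Definition mono (s : 'I_n -> bool) (r : 'I_m -> bool) : Prop :=
  forall j, zeta (tau j) == i -> cond (beta j) (s (tau j)) (r (eta j)).

Definition M (s : 'I_n -> bool) (r : 'I_m -> bool) (hm : mono s r) :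
  Hom (fobj F (fun j => BIn (zeta (sigma j)) (alpha j)))
      (fobj H (fun j => BOut (xi (theta j)) (gamma j))) :=
  comp (fmor H (fun j => outslot (xi (theta j)) (gamma j) (r (theta j))))
   (comp (psi (Vm r))
    (comp (fmor G (fun j => midslot (ej j) (hm j)))
     (comp (phi (Vn s))
       (fmor F (fun j => inslot (zeta (sigma j)) (alpha j) (s (sigma j))))))).
Arguments M : clear implicits.


Lemma castTgt_comp (Z U U' : Ob C) (e : U = U') (h : Hom Z U) :
  castTgt e h = comp (castTgt e (idm U)) h.
Proof. by case: _ / e; rewrite /= comp_id_l. Qed.

Lemma fmor_castG (S T : 'I_b -> Ob B) (g : forall j, vHom B (beta j) (S j) (T j))
  (E : fobj G S = fobj G T) : S = T ->
  (forall j, JMeq (g j) (vid B (beta j) (S j))) -> fmor G g = castTgt E (idm _).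
Proof.
move=> e; case: _ / e in g E * => hg.
have -> : g = fun j => vid B (beta j) (S j).
  by apply: functional_extensionality_dep => j; apply: JMeq_eq.
by rewrite fmor_id (proof_irrelevance _ E erefl).
Qed.

Lemma midslot_diag (L1 L2 : 'I_l) (e : L1 = L2) (bb x : bool) (hm : L1 == i -> cond bb x x) :
  JMeq (midslot e hm) (vid B bb (Obj L1 x)).
Proof.
case: _ / e; rewrite /midslot /Obj; move: hm.
by case: (L1 == i) => hm //=; case: bb hm; case: x.
Qed.

Lemma M_false hm :
  M (fun _ => false) (fun _ => false) hm =
  comp (fmor H (outMor gamma A i (fun j => xi (theta j)) f (idm X)))
    (comp (vcompT Hc phi psi (upd A i X))
       (fmor F (inMor alpha A i (fun j => zeta (sigma j)) (idm X) f))).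
Proof.
rewrite /M /vcompT castTgt_comp.
rewrite -!comp_assoc.
congr (comp _ (comp _ (comp _ _))).
apply: fmor_castG.
  by apply: functional_extensionality => j; rewrite /Obj (ej j).
by move=> j; apply: midslot_diag.
Qed.

Lemma M_true hm :
  M (fun _ => true) (fun _ => true) hm =
  comp (fmor H (outMor gamma A i (fun j => xi (theta j)) (idm Y) f))
    (comp (vcompT Hc phi psi (upd A i Y))
       (fmor F (inMor alpha A i (fun j => zeta (sigma j)) f (idm Y)))).
Proof.
rewrite /M /vcompT castTgt_comp.
rewrite -!comp_assoc.
congr (comp _ (comp _ (comp _ _))).
apply: fmor_castG.
  by apply: functional_extensionality => j; rewrite /Obj (ej j).
by move=> j; apply: midslot_diag.
Qed.


Definition castv (bb : bool) (O1 O2 : Ob B) (e : O1 = O2) : vHom B bb O1 O2 :=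
  eq_rect O1 (vHom B bb O1) (vid B bb O1) O2 e.

Lemma castv_id (bb : bool) (O : Ob B) (e : O = O) : castv bb e = vid B bb O.
Proof. by rewrite (proof_irrelevance _ e erefl). Qed.

Definition frslot (t : 'I_n) (s : 'I_n -> bool) (p : 'I_n) (bb : bool)
  (Q : p == t -> BIn (zeta p) bb = (if bb then X else Y)) :
  vHom B bb (BIn (zeta p) bb) (if p == t then (if bb then X else Y) else Obj (zeta p) (s p)) :=
  (if p == t as cc return (cc -> BIn (zeta p) bb = (if bb then X else Y)) ->
     vHom B bb (BIn (zeta p) bb) (if cc then (if bb then X else Y) else Obj (zeta p) (s p))
   then fun Q => castv bb (Q isT) else fun _ => inslot (zeta p) bb (s p)) Q.
Arguments frslot : clear implicits.

Lemma fr_slot1 t s p bb Q (K : p == t -> (zeta p == i) && ~~ s p) :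
  JMeq (inslot (zeta p) bb (s p))
   (vcomp (if p == t as c return
       vHom B bb (if c then (if bb then X else Y) else Vn s p) (if c then X else Vn s p)
     then (if bb as bb' return vHom B bb' (if bb' then X else Y) X then idm X else f)
     else vid B bb (Vn s p)) (frslot t s p bb Q)).
Proof.
move: Q; rewrite /frslot /inslot /Vn /Obj /BIn.
case E: (p == t) in K * => Q /=.
  case/andP: (K isT) => E2 /negbTE E3.
  move: Q; rewrite E2 E3 => Q /=.
  rewrite castv_id; case: bb {Q} => /=; by rewrite comp_id_l.
by rewrite vcomp_vid_l.
Qed.

Lemma midslot_in (L1 L2 : 'I_l) (e : L1 = L2) (bb x y : bool)
  (hm : L1 == i -> cond bb x y) (h : L1 == i) : JMeq (midslot e hm) (conn (hm h)).
Proof.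
case: _ / e; move: hm h; rewrite /midslot /Obj.
case: (L1 == i) => // hm h /=.
by rewrite (eq_irrelevance h isT).
Qed.

Lemma midslot_out (L1 L2 : 'I_l) (e : L1 = L2) (bb x y : bool)
  (hm : L1 == i -> cond bb x y) (h : (L1 == i) = false) :
  JMeq (midslot e hm) (vid B bb (A L1)).
Proof.
case: _ / e; move: hm; rewrite /midslot /Obj.
by rewrite h.
Qed.

Lemma castv_JMeq (bb : bool) (O1 O2 : Ob B) (e : O1 = O2) : JMeq (castv bb e) (vid B bb O1).
Proof. by case: _ / e. Qed.

Lemma vcomp_JMeq_l (bb : bool) (O1 O2 O3 O3' : Ob B) (u : vHom B bb O2 O3)
  (u' : vHom B bb O2 O3') (v : vHom B bb O1 O2) :
  O3 = O3' -> JMeq u u' -> JMeq (vcomp u v) (vcomp u' v).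
Proof. by move=> e; case: _ / e in u' * => Hj; rewrite (JMeq_eq Hj). Qed.

Lemma vcomp_JMeq_r (bb : bool) (O1 O1' O2 O3 : Ob B) (u : vHom B bb O2 O3)
  (v : vHom B bb O1 O2) (v' : vHom B bb O1' O2) :
  O1 = O1' -> JMeq v v' -> JMeq (vcomp u v) (vcomp u v').
Proof. by move=> e; case: _ / e in v' * => Hj; rewrite (JMeq_eq Hj). Qed.

Lemma fr_slot2 t s p bb Q (K : p == t -> (zeta p == i) && ~~ s p) :
  JMeq (inslot (zeta p) bb ((p == t) || s p))
   (vcomp (if p == t as c return
       vHom B bb (if c then (if bb then X else Y) else Vn s p) (if c then Y else Vn s p)
     then (if bb as bb' return vHom B bb' (if bb' then X else Y) Y then f else idm Y)
     else vid B bb (Vn s p)) (frslot t s p bb Q)).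
Proof.
move: Q; rewrite /frslot /inslot /Vn /Obj /BIn.
case E: (p == t) in K * => Q /=.
  case/andP: (K isT) => E2 /negbTE E3.
  move: Q; rewrite E2 => Q /=.
  rewrite castv_id; case: bb {Q} => /=; by rewrite ?comp_id_l ?comp_id_r.
by rewrite vcomp_vid_l.
Qed.

Definition grslot (t : 'I_n) (s : 'I_n -> bool) (r : 'I_m -> bool) (p : 'I_n) (q : 'I_m)
  (bb : bool) (e : zeta p = xi q) (hm : zeta p == i -> cond bb (s p) (r q))
  (Q : p == t -> (if bb then Y else X) = Obj (xi q) (r q)) :
  vHom B bb (if p == t then (if bb then Y else X) else Obj (zeta p) (s p)) (Obj (xi q) (r q)) :=
  (if p == t as cc return (cc -> (if bb then Y else X) = Obj (xi q) (r q)) ->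
     vHom B bb (if cc then (if bb then Y else X) else Obj (zeta p) (s p)) (Obj (xi q) (r q))
   then fun Q => castv bb (Q isT) else fun _ => midslot e hm) Q.
Arguments grslot : clear implicits.

Lemma gr_slot1 t s r p q bb e hm Q
  (K : p == t -> [&& zeta p == i, ~~ s p & r q == bb]) :
  JMeq (midslot e hm)
   (vcomp (grslot t s r p q bb e hm Q)
     (if p == t as c return
       vHom B bb (if c then X else Vn s p) (if c then (if bb then Y else X) else Vn s p)
     then (if bb as bb' return vHom B bb' X (if bb' then Y else X) then f else idm X)
     else vid B bb (Vn s p))).
Proof.
move: Q; rewrite /grslot /Vn.
case E: (p == t) in K * => Q /=; last by rewrite vcomp_vid_r.
case/and3P: (K isT) => E2 /negbTE E3 /eqP E4.
apply: JMeq_trans (midslot_in e hm E2) _.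
apply: JMeq_trans _ (JMeq_sym (vcomp_JMeq_l _ (esym (Q isT)) (castv_JMeq _ _))).
rewrite vcomp_vid_l.
move: (hm E2); rewrite E3 E4.
by case: bb {Q hm K E4} => /=.
Qed.

Lemma gr_slot2 t s r p q bb e hm hm' Q
  (K : p == t -> [&& zeta p == i, ~~ s p & r q == bb]) :
  JMeq (@midslot (zeta p) (xi q) e bb ((p == t) || s p) (r q) hm')
   (vcomp (grslot t s r p q bb e hm Q)
     (if p == t as c return
       vHom B bb (if c then Y else Vn s p) (if c then (if bb then Y else X) else Vn s p)
     then (if bb as bb' return vHom B bb' Y (if bb' then Y else X) then idm Y else f)
     else vid B bb (Vn s p))).
Proof.
move: Q hm'; rewrite /grslot /Vn.
case E: (p == t) in K * => Q hm' /=; last first.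
  by rewrite vcomp_vid_r (proof_irrelevance _ hm' hm).
case/and3P: (K isT) => E2 /negbTE E3 /eqP E4.
apply: JMeq_trans (midslot_in e hm' E2) _.
apply: JMeq_trans _ (JMeq_sym (vcomp_JMeq_l _ (esym (Q isT)) (castv_JMeq _ _))).
rewrite vcomp_vid_l.
move: (hm' E2); rewrite E4.
by case: bb {Q hm hm' K E4} => /=.
Qed.

Lemma M_flip_phi (t : 'I_n) (ht : zeta t = i) (Dt : dinatural_in phi t)
  (s : 'I_n -> bool) (r : 'I_m -> bool) (hst : s t = false)
  (hsucc : forall j, tau j = t -> beta j -> r (eta j))
  (hm : mono s r) (hm' : mono (fun k => (k == t) || s k) r) :
  M s r hm = M (fun k => (k == t) || s k) r hm'.
Proof.
have KF : forall p, p == t -> (zeta p == i) && ~~ s p.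
  by move=> p /eqP ->; rewrite ht eqxx hst.
have QF : forall p bb, p == t -> BIn (zeta p) bb = (if bb then X else Y).
  by move=> p bb /eqP ->; rewrite /BIn ht eqxx.
have KG : forall j, tau j == t -> [&& zeta (tau j) == i, ~~ s (tau j) & r (eta j) == beta j].
  move=> j /eqP E; rewrite E ht eqxx hst /=.
  case Eb: (beta j); first by rewrite (hsucc j E Eb).
  have := hm j; rewrite E ht eqxx /cond Eb hst => /(_ isT).
  by case: (r (eta j)).
have QG : forall j, tau j == t -> (if beta j then Y else X) = Obj (xi (eta j)) (r (eta j)).
  move=> j /KG /and3P [E2 _ /eqP E4].
  by rewrite /Obj -(ej j) E2 E4.
have E1 : upd (Vn s) t X = Vn s.
  apply: functional_extensionality => k; rewrite /upd.
  by case: eqP => // ->; rewrite /Vn /Obj ht eqxx hst.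
have E2 : upd (Vn s) t Y = Vn (fun k => (k == t) || s k).
  apply: functional_extensionality => k; rewrite /upd /Vn.
  by case: eqP => // ->; rewrite /Obj ht !eqxx.
rewrite /M; congr (comp _ (comp _ _)).
eapply (@flip_core _ _ _ _ _ _ _ _ _ _ _ phi t Dt X Y f (Vn s) _ _ E1 E2 _ _
  (fun j => frslot t s (sigma j) (alpha j) (QF (sigma j) (alpha j)))
  (fun j => grslot t s r (tau j) (eta j) (beta j) (ej j) (hm j) (QG j))).
- by move=> j; apply: (fr_slot1 (p := sigma j) (bb := alpha j) _ (KF (sigma j))).
- by move=> j; apply: (fr_slot2 (p := sigma j) (bb := alpha j) _ (KF (sigma j))).
- by move=> j; apply: (gr_slot1 (p := tau j) (q := eta j) (bb := beta j) _ _ _ (KG j)).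
- by move=> j; apply: (gr_slot2 (p := tau j) (q := eta j) (bb := beta j) _ _ _ _ (KG j)).
Qed.

Lemma castv_JMeq2 (bb : bool) (O1 O2 : Ob B) (e : O1 = O2) : JMeq (castv bb e) (vid B bb O2).
Proof. by case: _ / e. Qed.

Definition frpslot (u : 'I_m) (s : 'I_n -> bool) (r : 'I_m -> bool) (p : 'I_n) (q : 'I_m)
  (bb : bool) (e : zeta p = xi q) (hm : zeta p == i -> cond bb (s p) (r q))
  (Q : q == u -> Obj (zeta p) (s p) = (if bb then X else Y)) :
  vHom B bb (Obj (zeta p) (s p)) (if q == u then (if bb then X else Y) else Obj (xi q) (r q)) :=
  (if q == u as cc return (cc -> Obj (zeta p) (s p) = (if bb then X else Y)) ->
     vHom B bb (Obj (zeta p) (s p)) (if cc then (if bb then X else Y) else Obj (xi q) (r q))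
   then fun Q => castv bb (Q isT) else fun _ => midslot e hm) Q.
Arguments frpslot : clear implicits.

Lemma frp_slot1 u s r p q bb e hm Q
  (K : q == u -> [&& zeta p == i, ~~ r q & s p == ~~ bb]) :
  JMeq (midslot e hm)
   (vcomp (if q == u as c return
       vHom B bb (if c then (if bb then X else Y) else Vm r q) (if c then X else Vm r q)
     then (if bb as bb' return vHom B bb' (if bb' then X else Y) X then idm X else f)
     else vid B bb (Vm r q)) (frpslot u s r p q bb e hm Q)).
Proof.
move: Q; rewrite /frpslot /Vm.
case E: (q == u) in K * => Q /=; last by rewrite vcomp_vid_l.
case/and3P: (K isT) => E2 /negbTE E3 /eqP E4.
apply: JMeq_trans (midslot_in e hm E2) _.
apply: JMeq_trans _ (JMeq_sym (vcomp_JMeq_r _ (Q isT) (castv_JMeq2 _ _))).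
rewrite vcomp_vid_r.
move: (hm E2); rewrite E3 E4.
by case: bb {Q hm K E4} => /=.
Qed.

Lemma frp_slot2 u s r p q bb e hm hm' Q
  (K : q == u -> [&& zeta p == i, ~~ r q & s p == ~~ bb]) :
  JMeq (@midslot (zeta p) (xi q) e bb (s p) ((q == u) || r q) hm')
   (vcomp (if q == u as c return
       vHom B bb (if c then (if bb then X else Y) else Vm r q) (if c then Y else Vm r q)
     then (if bb as bb' return vHom B bb' (if bb' then X else Y) Y then f else idm Y)
     else vid B bb (Vm r q)) (frpslot u s r p q bb e hm Q)).
Proof.
move: Q hm'; rewrite /frpslot /Vm.
case E: (q == u) in K * => Q hm' /=; last first.
  by rewrite vcomp_vid_l (proof_irrelevance _ hm' hm).
case/and3P: (K isT) => E2 /negbTE E3 /eqP E4.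
apply: JMeq_trans (midslot_in e hm' E2) _.
apply: JMeq_trans _ (JMeq_sym (vcomp_JMeq_r _ (Q isT) (castv_JMeq2 _ _))).
rewrite vcomp_vid_r.
move: (hm' E2); rewrite E4.
by case: bb {Q hm hm' K E4} => /=.
Qed.

Definition hrslot (u : 'I_m) (r : 'I_m -> bool) (q : 'I_m) (bb : bool)
  (Q : q == u -> (if bb then Y else X) = BOut (xi q) bb) :
  vHom B bb (if q == u then (if bb then Y else X) else Obj (xi q) (r q)) (BOut (xi q) bb) :=
  (if q == u as cc return (cc -> (if bb then Y else X) = BOut (xi q) bb) ->
     vHom B bb (if cc then (if bb then Y else X) else Obj (xi q) (r q)) (BOut (xi q) bb)
   then fun Q => castv bb (Q isT) else fun _ => outslot (xi q) bb (r q)) Q.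
Arguments hrslot : clear implicits.

Lemma hr_slot1 u r q bb Q (K : q == u -> (xi q == i) && ~~ r q) :
  JMeq (outslot (xi q) bb (r q))
   (vcomp (hrslot u r q bb Q)
     (if q == u as c return
       vHom B bb (if c then X else Vm r q) (if c then (if bb then Y else X) else Vm r q)
     then (if bb as bb' return vHom B bb' X (if bb' then Y else X) then f else idm X)
     else vid B bb (Vm r q))).
Proof.
move: Q; rewrite /hrslot /outslot /Vm /Obj /BOut.
case E: (q == u) in K * => Q /=.
  case/andP: (K isT) => E2 /negbTE E3.
  move: Q; rewrite E2 E3 => Q /=.
  rewrite castv_id; case: bb {Q} => /=; by rewrite ?comp_id_l ?comp_id_r.
by rewrite vcomp_vid_r.
Qed.

Lemma hr_slot2 u r q bb Q (K : q == u -> (xi q == i) && ~~ r q) :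
  JMeq (outslot (xi q) bb ((q == u) || r q))
   (vcomp (hrslot u r q bb Q)
     (if q == u as c return
       vHom B bb (if c then Y else Vm r q) (if c then (if bb then Y else X) else Vm r q)
     then (if bb as bb' return vHom B bb' Y (if bb' then Y else X) then idm Y else f)
     else vid B bb (Vm r q))).
Proof.
move: Q; rewrite /hrslot /outslot /Vm /Obj /BOut.
case E: (q == u) in K * => Q /=.
  case/andP: (K isT) => E2 /negbTE E3.
  move: Q; rewrite E2 => Q /=.
  rewrite castv_id; case: bb {Q} => /=; by rewrite ?comp_id_l ?comp_id_r.
by rewrite vcomp_vid_r.
Qed.

Lemma M_flip_psi (u : 'I_m) (hu : xi u = i) (Du : dinatural_in psi u)
  (s : 'I_n -> bool) (r : 'I_m -> bool) (hru : r u = false)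
  (hsucc : forall j, eta j = u -> ~~ beta j -> s (tau j))
  (hm : mono s r) (hm' : mono s (fun k => (k == u) || r k)) :
  M s r hm = M s (fun k => (k == u) || r k) hm'.
Proof.
have KH : forall q, q == u -> (xi q == i) && ~~ r q.
  by move=> q /eqP ->; rewrite hu eqxx hru.
have QH : forall q bb, q == u -> (if bb then Y else X) = BOut (xi q) bb.
  by move=> q bb /eqP ->; rewrite /BOut hu eqxx.
have KG : forall j, eta j == u ->
    [&& zeta (tau j) == i, ~~ r (eta j) & s (tau j) == ~~ beta j].
  move=> j /eqP E; rewrite (ej j) E hu eqxx hru /=.
  case Eb: (beta j); last by rewrite (hsucc j E (negbT Eb)).
  have := hm j; rewrite (ej j) E hu eqxx /cond Eb hru => /(_ isT).
  by case: (s (tau j)).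
have QG : forall j, eta j == u -> Obj (zeta (tau j)) (s (tau j)) = (if beta j then X else Y).
  move=> j /KG /and3P [E2 _ /eqP E4].
  by rewrite /Obj E2 E4; case: (beta j).
have E1 : upd (Vm r) u X = Vm r.
  apply: functional_extensionality => k; rewrite /upd.
  by case: eqP => // ->; rewrite /Vm /Obj hu eqxx hru.
have E2 : upd (Vm r) u Y = Vm (fun k => (k == u) || r k).
  apply: functional_extensionality => k; rewrite /upd /Vm.
  by case: eqP => // ->; rewrite /Obj hu !eqxx.
rewrite /M !comp_assoc; congr (comp (comp _ _) _); rewrite -!comp_assoc.
eapply (@flip_core _ _ _ _ _ _ _ _ _ _ _ psi u Du X Y f (Vm r) _ _ E1 E2 _ _
  (fun j => frpslot u s r (tau j) (eta j) (beta j) (ej j) (hm j) (QG j))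
  (fun j => hrslot u r (theta j) (gamma j) (QH (theta j) (gamma j)))).
- by move=> j; apply: (frp_slot1 (p := tau j) (q := eta j) (bb := beta j) _ _ _ (KG j)).
- by move=> j; apply: (frp_slot2 (p := tau j) (q := eta j) (bb := beta j) _ _ _ _ (KG j)).
- by move=> j; apply: (hr_slot1 (q := theta j) (bb := gamma j) _ (KH (theta j))).
- by move=> j; apply: (hr_slot2 (q := theta j) (bb := gamma j) _ (KH (theta j))).
Qed.

Lemma inslot_ext (L : 'I_l) (bb x y : bool) : (L == i -> x = y) ->
  JMeq (inslot L bb x) (inslot L bb y).
Proof.
rewrite /inslot /Obj /BIn; case E: (L == i) => h /=; last exact: JMeq_refl.
by rewrite (h isT).
Qed.

Lemma outslot_ext (L : 'I_l) (bb x y : bool) : (L == i -> x = y) ->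
  JMeq (outslot L bb x) (outslot L bb y).
Proof.
rewrite /outslot /Obj /BOut; case E: (L == i) => h /=; last exact: JMeq_refl.
by rewrite (h isT).
Qed.

Lemma midslot_ext (L1 L2 : 'I_l) (e : L1 = L2) (bb x y x' y' : bool)
  (hm : L1 == i -> cond bb x y) (hm' : L1 == i -> cond bb x' y') :
  (L1 == i -> x = x' /\ y = y') -> JMeq (midslot e hm) (midslot e hm').
Proof.
case E: (L1 == i) => h.
  apply: JMeq_trans (midslot_in e hm E) _.
  apply: JMeq_trans _ (JMeq_sym (midslot_in e hm' E)).
  move: (hm E) (hm' E); case: (h isT) => -> -> h1 h2.
  by rewrite (proof_irrelevance _ h1 h2).
apply: JMeq_trans (midslot_out e hm E) _.
exact: (JMeq_sym (midslot_out e hm' E)).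
Qed.

Lemma M5_congr (V V' : 'I_n -> Ob B) (W W' : 'I_m -> Ob B)
  (fin : forall j, vHom B (alpha j) (BIn (zeta (sigma j)) (alpha j)) (V (sigma j)))
  (fin' : forall j, vHom B (alpha j) (BIn (zeta (sigma j)) (alpha j)) (V' (sigma j)))
  (g : forall j, vHom B (beta j) (V (tau j)) (W (eta j)))
  (g' : forall j, vHom B (beta j) (V' (tau j)) (W' (eta j)))
  (h : forall j, vHom B (gamma j) (W (theta j)) (BOut (xi (theta j)) (gamma j)))
  (h' : forall j, vHom B (gamma j) (W' (theta j)) (BOut (xi (theta j)) (gamma j))) :
  V = V' -> W = W' -> (forall j, JMeq (fin j) (fin' j)) ->
  (forall j, JMeq (g j) (g' j)) -> (forall j, JMeq (h j) (h' j)) ->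
  comp (fmor H h) (comp (psi W) (comp (fmor G g) (comp (phi V) (fmor F fin)))) =
  comp (fmor H h') (comp (psi W') (comp (fmor G g') (comp (phi V') (fmor F fin')))).
Proof.
move=> eV eW; case: _ / eV in fin' g' *; case: _ / eW in g' h' * => h1 h2 h3.
have -> : fin' = fin by apply: functional_extensionality_dep => j; apply: JMeq_eq; apply: JMeq_sym.
have -> : g' = g by apply: functional_extensionality_dep => j; apply: JMeq_eq; apply: JMeq_sym.
have -> : h' = h by apply: functional_extensionality_dep => j; apply: JMeq_eq; apply: JMeq_sym.
by [].
Qed.

Lemma M_ext (s s' : 'I_n -> bool) (r r' : 'I_m -> bool) hm hm' :
  (forall k, zeta k == i -> s k = s' k) -> (forall k, xi k == i -> r k = r' k) ->
  M s r hm = M s' r' hm'.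
Proof.
move=> hs hr; apply: M5_congr.
- apply: functional_extensionality => k; rewrite /Vn /Obj.
  by case E: (zeta k == i); rewrite // (hs k E).
- apply: functional_extensionality => k; rewrite /Vm /Obj.
  by case E: (xi k == i); rewrite // (hr k E).
- by move=> j; apply: inslot_ext => /hs.
- move=> j; apply: midslot_ext => E; split; first exact: hs.
  by apply: hr; rewrite -(ej j).
- by move=> j; apply: outslot_ext => /hr.
Qed.

Lemma mono_true : mono (fun _ => true) (fun _ => true).
Proof. by move=> j _; rewrite /cond; case: (beta j). Qed.

Lemma mono_false : mono (fun _ => false) (fun _ => false).
Proof. by move=> j _; rewrite /cond; case: (beta j). Qed.

Definition count (s : 'I_n -> bool) (r : 'I_m -> bool) : nat :=
  #|[set k | (zeta k == i) && ~~ s k]| + #|[set k | (xi k == i) && ~~ r k]|.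

Lemma M_count0 s r hm : count s r = 0 -> M s r hm = M (fun _ => true) (fun _ => true) mono_true.
Proof.
rewrite /count => /eqP; rewrite addn_eq0 => /andP [/eqP c1 /eqP c2].
apply: M_ext.
  move=> k hk; apply/negPn/negP => hs.
  have := cards0_eq c1 => /setP /(_ k); by rewrite !inE hk hs.
move=> k hk; apply/negPn/negP => hs.
have := cards0_eq c2 => /setP /(_ k); by rewrite !inE hk hs.
Qed.

Lemma flippable s r
  (acyc : component_acyclic alpha beta gamma sigma tau eta theta zeta xi i)
  (nz : 0 < count s r) :
  (exists t, [/\ zeta t = i, s t = false & forall j, tau j = t -> beta j -> r (eta j)]) \/
  (exists u, [/\ xi u = i, r u = false & forall j, eta j = u -> ~~ beta j -> s (tau j)]).
Proof.
set e := cedge alpha beta gamma sigma tau eta theta.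
pose cand (v : ('I_a + 'I_b + 'I_c) + ('I_n + 'I_m)) : bool :=
  match v with
  | inr (inl t) => (zeta t == i) && ~~ s t
  | inr (inr u) => (xi u == i) && ~~ r u
  | _ => false end.
pose rch v := [set w | connect e v w].
have key : forall v p w, cand v -> e v p -> e p w -> #|rch w| < #|rch v|.
  move=> v p w cv evp epw; apply: proper_card; apply/properP; split.
    apply/subsetP => x; rewrite !inE => hwx.
    exact: connect_trans (connect1 evp) (connect_trans (connect1 epw) hwx).
  exists v; rewrite !inE ?connect0 //; apply/negP => hwv.
  have := acyc v p _ evp; rewrite -/e.
  move/(_ _)/negP; apply.
    exists v; split; last exact: connect0.
    by move: cv; clear evp hwv; case: v => [//|[t|u]] /andP [].
  exact: connect_trans (connect1 epw) hwv.
have [v1 cv1] : exists v, cand v.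
  move: nz; rewrite /count.
  case: (set_0Vmem [set k | (zeta k == i) && ~~ s k]) => [->|[k]].
    case: (set_0Vmem [set k | (xi k == i) && ~~ r k]) => [->|[k]].
      by rewrite !cards0.
    by rewrite inE => hk _; exists (inr (inr k)).
  by rewrite inE => hk _; exists (inr (inl k)).
case: (arg_minnP (fun v => #|rch v|) cv1) => v0 cv0 min0.
case: v0 cv0 min0 => [//|[t|u]] /= /andP [/eqP ht /negbTE hs] min0.
  left; exists t; split=> // j Et Eb; apply/negPn/negP => hr.
  have := key (inr (inl t)) (inl (inl (inr j))) (inr (inr (eta j))).
  rewrite /= ht eqxx hs Et eqxx Eb /= eqxx => /(_ isT isT isT).
  rewrite ltnNge min0 //= -(ej j) Et ht eqxx /=; exact: hr.
right; exists u; split=> // j Eu Eb; apply/negPn/negP => hs'.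
have := key (inr (inr u)) (inl (inl (inr j))) (inr (inl (tau j))).
rewrite /= ht eqxx hs Eu eqxx Eb /= eqxx => /(_ isT isT isT).
rewrite ltnNge min0 //= (ej j) Eu ht eqxx /=; exact: hs'.
Qed.

Lemma to_true
  (Dn : forall x : 'I_n, zeta x = i -> dinatural_in phi x)
  (Dm : forall y : 'I_m, xi y = i -> dinatural_in psi y)
  (acyc : component_acyclic alpha beta gamma sigma tau eta theta zeta xi i) :
  forall k s r hm, count s r <= k -> M s r hm = M (fun _ => true) (fun _ => true) mono_true.
Proof.
elim=> [|k IH] s r hm hc.
  by apply: M_count0; apply/eqP; rewrite -leqn0.
case: (posnP (count s r)) => [c0|cpos]; first exact: M_count0.
case: (flippable acyc cpos) => [[t [ht hst hsucc]]|[u [hu hru hsucc]]].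
  have hm' : mono (fun k => (k == t) || s k) r.
    move=> j hj /=; case: (eqVneq (tau j) t) => [Et|_]; last exact: hm.
    rewrite /cond /=; case Eb: (beta j); first by rewrite (hsucc j Et Eb) ?implybT.
    by case: (r (eta j)).
  rewrite (M_flip_phi ht (Dn t ht) hst hsucc hm hm'); apply: IH.
  rewrite -ltnS; apply: leq_trans hc; rewrite /count ltn_add2r.
  apply: proper_card; apply/properP; split.
    by apply/subsetP => x; rewrite !inE negb_or => /and3P [-> _ ->].
  by exists t; rewrite !inE ?ht ?hst ?eqxx.
have hm' : mono s (fun k => (k == u) || r k).
  move=> j hj /=; case: (eqVneq (eta j) u) => [Eu|_]; last exact: hm.
  rewrite /cond /=; case Eb: (beta j); first by case: (s (tau j)).
  by rewrite (hsucc j Eu (negbT Eb)) ?implybT.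
rewrite (M_flip_psi hu (Dm u hu) hru hsucc hm hm'); apply: IH.
rewrite -ltnS; apply: leq_trans hc; rewrite /count ltn_add2l.
apply: proper_card; apply/properP; split.
  by apply/subsetP => x; rewrite !inE negb_or => /and3P [-> _ ->].
by exists u; rewrite !inE ?hu ?hru ?eqxx.
Qed.

Lemma final
  (Dn : forall x : 'I_n, zeta x = i -> dinatural_in phi x)
  (Dm : forall y : 'I_m, xi y = i -> dinatural_in psi y)
  (acyc : component_acyclic alpha beta gamma sigma tau eta theta zeta xi i) :
  comp (fmor H (outMor gamma A i (fun j => xi (theta j)) f (idm X)))
    (comp (vcompT Hc phi psi (upd A i X))
       (fmor F (inMor alpha A i (fun j => zeta (sigma j)) (idm X) f))) =
  comp (fmor H (outMor gamma A i (fun j => xi (theta j)) (idm Y) f))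
    (comp (vcompT Hc phi psi (upd A i Y))
       (fmor F (inMor alpha A i (fun j => zeta (sigma j)) f (idm Y)))).
Proof.
rewrite -(M_false mono_false) -(M_true mono_true).
exact: (to_true Dn Dm acyc mono_false (leqnn _)).
Qed.

End Main.

Theorem mainTheorem3 (B C : Category)
  (a : nat) (alpha : 'I_a -> bool) (b : nat) (beta : 'I_b -> bool)
  (c : nat) (gamma : 'I_c -> bool)
  (F : MFunctor B C alpha) (G : MFunctor B C beta) (H : MFunctor B C gamma)
  (n m l : nat) (sigma : 'I_a -> 'I_n) (tau : 'I_b -> 'I_n)
  (eta : 'I_b -> 'I_m) (theta : 'I_c -> 'I_m)
  (phi : transf F G sigma tau) (psi : transf G H eta theta)
  (zeta : 'I_n -> 'I_l) (xi : 'I_m -> 'I_l)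
  (Hc : (fun j => zeta (tau j)) = (fun j => xi (eta j)))
  (Hpo : is_pushout tau eta zeta xi)
  (i : 'I_l) :
  (forall x : 'I_n, zeta x = i -> dinatural_in phi x) ->
  (forall y : 'I_m, xi y = i -> dinatural_in psi y) ->
  component_acyclic alpha beta gamma sigma tau eta theta zeta xi i ->
  dinatural_in (vcompT Hc phi psi) i.
Proof.
move=> Dn Dm acyc A X Y f.
exact: (final Hc A f Dn Dm acyc).
Qed.
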